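(* Let $\mathcal{P}$ be the set of sequences $\boldsymbol{b}=(b_k)_{k\geq1}$ with $b_k\in\{0,1,2,3\}$ such that $b_k=g_k$ for all but finitely many $k$, where $g_k=3$ for $k$ odd and $g_k=0$ for $k$ even. Let $H(a,b)=\max(a-3,-b)$ for $a,b\in\{0,1,2,3\}$, and for $\boldsymbol{b}\in\mathcal{P}$ put \[ \ell_H(\boldsymbol{b})=\sum_{k\geq1}\big(H(b_{k+1},b_k)-H(g_{k+1},g_k)\big),\qquad \ell(\boldsymbol{b})=2\ell_H(\boldsymbol{b})-(3-b_1), \] \[ |\boldsymbol{b}|=\sum_{k\geq1}(b_k-g_k)+2\sum_{k\geq1}k\big(H(b_{k+1},b_k)-H(g_{k+1},g_k)\big). \] Let $J(x,q)=\sum_{\boldsymbol{b}\in\mathcal{P}}x^{\ell(\boldsymbol{b})}q^{|\boldsymbol{b}|}$. Then \[ qJ(x,q) = (1+xq)(1+q-xq+x^2q^3)\,J(xq,q)-(1+xq^2)(1-x^2q^2)\,J(xq^{2},q). \]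
   Context: Here $\mathcal{P}$ is the Kyoto path realization of the $A^{(1)}_1$ highest weight crystal $B(3\Lambda_0)$ using the Kirillov–Reshetikhin perfect crystal $B^{1,3}=\{0,1,2,3\}$ (with $\tilde f_1: a\mapsto a+1$, $\tilde f_0:a\mapsto a-1$), whose ground-state path is $\cdots\otimes 0\otimes 3\otimes 0\otimes 3$; $|\boldsymbol{b}|\ge 0$ is the number of Kashiwara lowering operators needed to reach $\boldsymbol{b}$ from the ground-state path. $J$ is a formal power series in $q$ with Laurent polynomial coefficients in $x$. *)

(* Defs.v *)
From HB Require Import structures.
From mathcomp Require Import all_boot all_order all_algebra.
From mathcomp Require Import boolp classical_sets cardinality.
From mathcomp Require Import finmap.
Set Implicit Arguments. Unset Strict Implicit. Unset Printing Implicit Defensive.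
Import Order.TTheory GRing.Theory Num.Theory.
Local Open Scope ring_scope.
Local Open Scope classical_set_scope.

(* ground-state sequence: g_k = 3 for k odd, 0 for k even (g_0 = 0 is an
   unused padding slot, sequences are indexed from k = 1) *)
Definition g (k : nat) : nat := if odd k then 3%N else 0%N.

Definition H (a b : nat) : int := Num.max (a%:Z - 3) (- b%:Z).

(* P : sequences b = (b_k)_{k>=1} with b_k in {0,1,2,3}, equal to g_k for all
   but finitely many k.  Sequences are functions nat -> nat; the unused slot
   b 0 is normalised to g 0 = 0. *)
Definition inP (b : nat -> nat) : Prop :=
  (forall k, (b k <= 3)%N) /\ b 0%N = g 0%N /\
  exists N, forall k, (N <= k)%N -> b k = g k.

Definition tail_bound (b : nat -> nat) : nat :=
  xget 0%N [set N | forall k, (N <= k)%N -> b k = g k].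

Definition dH (b : nat -> nat) (k : nat) : int :=
  H (b k.+1) (b k) - H (g k.+1) (g k).

Definition ellH (b : nat -> nat) : int :=
  \sum_(1 <= k < tail_bound b) dH b k.

Definition ell (b : nat -> nat) : int := 2 * ellH b - (3 - (b 1%N)%:Z).

Definition absb (b : nat -> nat) : int :=
  \sum_(1 <= k < tail_bound b) ((b k)%:Z - (g k)%:Z)
  + 2 * \sum_(1 <= k < tail_bound b) (k%:Z * dH b k).

Definition Sset (m n : int) : set (nat -> nat) :=
  [set b | inP b /\ ell b = m /\ absb b = n].

(* coefficient of x^m q^n in J(x,q) = sum_{b in P} x^{ell b} q^{|b|} *)
Definition Jcoef (m n : int) : int := (#|` fset_set (Sset m n)|)%fset%:Z.

(* coefficient of x^m q^n in J(x q^a, q) = sum_b x^{ell b} q^{a ell b + |b|} *)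
Definition Jsub (a : int) (m n : int) : int := Jcoef m (n - a * m).

(* Laurent polynomials in x, q as lists of monomials (coef, x-exponent, q-exponent) *)
Definition lpoly := seq (int * int * int).
Definition lmul (p r : lpoly) : lpoly :=
  [seq (u.1.1 * v.1.1, u.1.2 + v.1.2, u.2 + v.2) | u <- p, v <- r].
(* coefficient of x^m q^n in p(x,q) * F, where F has coefficients F m n *)
Definition act (p : lpoly) (F : int -> int -> int) (m n : int) : int :=
  \sum_(t <- p) t.1.1 * F (m - t.1.2) (n - t.2).

Definition P_q : lpoly := [:: (1, 0, 1)].
Definition P_1xq : lpoly := [:: (1, 0, 0); (1, 1, 1)].
Definition P_2 : lpoly :=
  [:: (1, 0, 0); (1, 0, 1); (-1, 1, 1); (1, 2, 3)].
Definition P_1xq2 : lpoly := [:: (1, 0, 0); (1, 1, 2)].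
Definition P_1mx2q2 : lpoly := [:: (1, 0, 0); (-1, 2, 2)].

(* Main.v *)
Require Import Defs.
From HB Require Import structures.
From mathcomp Require Import all_boot all_order all_algebra.
From mathcomp Require Import boolp classical_sets cardinality.
From mathcomp Require Import finmap.
From mathcomp Require Import ring zify.
Import GRing.Theory Num.Theory.
Set Implicit Arguments. Unset Strict Implicit. Unset Printing Implicit Defensive.
Local Open Scope ring_scope.

Definition valid (N : nat) (b : nat -> nat) := forall k, (N <= k)%N -> b k = g k.

Lemma validW N M b : (N <= M)%N -> valid N b -> valid M b.
Proof. by move=> NM v k Mk; apply: v; apply: leq_trans Mk. Qed.

Lemma tail_boundP b : inP b -> valid (tail_bound b) b.
Proof. by case=> _ [_ [N HN]]; exact: (@xgetI nat 0%N [set N | valid N b] N HN). Qed.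

Lemma sum_ext (u : nat -> int) N M : (forall k, (N <= k)%N -> u k = 0) -> (N <= M)%N ->
  \sum_(1 <= k < M) u k = \sum_(1 <= k < N) u k.
Proof.
move=> u0; elim: M => [|M IH]; first by rewrite leqn0 => /eqP ->.
rewrite leq_eqVlt => /orP [/eqP -> //| NM].
case: M IH NM => [|M] IH NM.
  by rewrite big_geq // big_geq //; apply: ltnW.
rewrite big_nat_recr //= IH ?u0 ?addr0 //; apply: ltnW.
Qed.

Lemma sum_tel (u : nat -> int) N : (1 <= N)%N ->
  \sum_(1 <= j < N) (u j - u j.+1) = u 1%N - u N.
Proof.
elim: N => [//|N IH] _.
case: N IH => [|N] IH; first by rewrite big_geq // subrr.
rewrite big_nat_recr //= IH //; ring.
Qed.

Lemma sum_tel2' (u : nat -> int) N : (1 <= N)%N ->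
  \sum_(1 <= j < N) (j.+1%:Z * (u j - u j.+1) - u j) = u 1%N - N%:Z * u N.
Proof.
elim: N => [//|N IH] _.
case: N IH => [|N] IH; first by rewrite !big_geq // mul1r; ring.
rewrite big_nat_recr //= IH //.
have -> : (N.+2)%:Z = N.+1%:Z + 1 by rewrite -addn1 PoszD.
ring.
Qed.

Lemma sum_tel2 (u : nat -> int) N : (1 <= N)%N ->
  \sum_(1 <= j < N) (j.+1%:Z * (u j - u j.+1)) =
  \sum_(1 <= j < N) u j + u 1%N - N%:Z * u N.
Proof.
move=> N1; rewrite -[LHS](subrK (\sum_(1 <= j < N) u j)) -sumrB sum_tel2' //; ring.
Qed.


Definition delta (b : nat -> nat) k : int := (b k)%:Z - (g k)%:Z.

Lemma dH_valid b N k : valid N b -> (N <= k)%N -> dH b k = 0.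
Proof. by move=> v Nk; rewrite /dH !v ?subrr //; apply: leqW. Qed.

Lemma delta_valid b N k : valid N b -> (N <= k)%N -> delta b k = 0.
Proof. by move=> v Nk; rewrite /delta v ?subrr. Qed.

Lemma ellH_N b N : inP b -> valid N b -> ellH b = \sum_(1 <= k < N) dH b k.
Proof.
move=> Pb v; rewrite /ellH.
rewrite -(@sum_ext _ _ (maxn N (tail_bound b))) ?leq_maxr //; last first.
  by move=> k h; apply: dH_valid h; apply: tail_boundP.
by rewrite (@sum_ext _ N) ?leq_maxl // => k; apply: dH_valid.
Qed.

Lemma absb_N b N : inP b -> valid N b -> absb b =
  \sum_(1 <= k < N) delta b k + 2 * \sum_(1 <= k < N) (k%:Z * dH b k).
Proof.
move=> Pb v; rewrite /absb.
have vt := tail_boundP Pb.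
set M := maxn N (tail_bound b).
rewrite -(@sum_ext (fun k => (b k)%:Z - (g k)%:Z) (tail_bound b) M) ?leq_maxr //; last first.
  by move=> k h; rewrite vt // subrr.
rewrite -(@sum_ext (fun k => k%:Z * dH b k) (tail_bound b) M) ?leq_maxr //; last first.
  by move=> k h; rewrite (dH_valid vt) // mulr0.
rewrite (@sum_ext (fun k => (b k)%:Z - (g k)%:Z) N M) ?leq_maxl //; last first.
  by move=> k h; rewrite v // subrr.
rewrite (@sum_ext (fun k => k%:Z * dH b k) N M) ?leq_maxl //.
by move=> k h; rewrite (dH_valid v) // mulr0.
Qed.

Definition sigma (c : nat) (b : nat -> nat) (k : nat) : nat :=
  match k with 0 => 0%N | 1 => c | j.+1 => (3 - b j)%N end.
Definition tau (b : nat -> nat) (k : nat) : nat :=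
  match k with 0 => 0%N | j.+1 => (3 - b j.+2)%N end.
Definition dd (c c' : nat) : int := ((c - c') + (c' - c))%N%:Z.

Lemma g_succ j : g j.+1 = (3 - g j)%N.
Proof. by rewrite /g /=; case: (odd j). Qed.
Lemma g_le j : (g j <= 3)%N.
Proof. by rewrite /g; case: (odd j). Qed.

Lemma H_comp a b : (a <= 3)%N -> (b <= 3)%N -> H (3 - a) (3 - b) = H a b + b%:Z - a%:Z.
Proof. by move: a b => [|[|[|[|a]]]] [|[|[|[|b]]]]. Qed.

Lemma hid c c' : (c <= 3)%N -> (c' <= 3)%N ->
  2 * (H (3 - c') c - H 0 3) + c%:Z + c'%:Z - 6 = dd c c'.
Proof. by move: c c' => [|[|[|[|a]]]] [|[|[|[|b]]]]. Qed.


Lemma natB3 x : (x <= 3)%N -> ((3 - x)%N)%:Z = 3 - x%:Z.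
Proof. by move: x => [|[|[|[|x]]]]. Qed.

Lemma sigma_valid c b N : (1 <= N)%N -> valid N b -> valid N.+1 (sigma c b).
Proof.
move=> N1 v [|[|j]] //= h; first lia.
by rewrite v ?g_succ //.
Qed.

Lemma exists_valid b : inP b -> exists N, (1 <= N)%N /\ valid N b.
Proof.
move=> Pb; exists (maxn 1 (tail_bound b)); split; first by rewrite leq_maxl.
by apply: validW (tail_boundP Pb); rewrite leq_maxr.
Qed.

Lemma sigma_inP c b : (c <= 3)%N -> inP b -> inP (sigma c b).
Proof.
move=> c3 Pb; have [N [N1 v]] := exists_valid Pb.
split; first by case=> [|[|j]] //=; rewrite leq_subr.
split; first by [].
by exists N.+1; apply: sigma_valid.
Qed.

Lemma sigma_stats c b : (c <= 3)%N -> inP b ->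
  ell (sigma c b) = ell b + dd c (b 1%N) /\
  absb (sigma c b) = absb b + ell b + dd c (b 1%N).
Proof.
move=> c3 Pb; have [N [N1 vN]] := exists_valid Pb.
have Ps := sigma_inP c3 Pb; have vs := sigma_valid c N1 vN.
have b3 : forall k, (b k <= 3)%N by case: Pb.
set s := sigma c b.
have keyT : forall j, (1 <= j)%N -> dH s j.+1 = dH b j + delta b j - delta b j.+1.
  move=> [//|i] _; rewrite /dH /delta /s /= [g i.+3]g_succ [g i.+2]g_succ !H_comp ?g_le ?leq_subr //.
  ring.
have keyd : forall j, (1 <= j)%N -> delta s j.+1 = - delta b j.
  move=> [//|i] _; rewrite /delta /s /= g_succ !natB3 ?g_le //; ring.
have dH1 : dH s 1%N = H (3 - b 1%N) c - H 0 3 by [].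
have hL : \sum_(1 <= j < N) dH s j.+1 = \sum_(1 <= j < N) dH b j + delta b 1%N - delta b N.
  rewrite (eq_big_nat _ _ (F2 := fun j => dH b j + (delta b j - delta b j.+1))); last first.
    by move=> j /andP [j1 _]; rewrite keyT //; ring.
  by rewrite big_split /= sum_tel // addrA.
have hD : \sum_(1 <= j < N) delta s j.+1 = - \sum_(1 <= j < N) delta b j.
  rewrite -sumrN; apply: eq_big_nat => j /andP [j1 _]; exact: keyd.
have hE : \sum_(1 <= j < N) (j.+1%:Z * dH s j.+1) =
   \sum_(1 <= j < N) (j%:Z * dH b j) + \sum_(1 <= j < N) dH b j
   + (\sum_(1 <= j < N) delta b j + delta b 1%N - N%:Z * delta b N).
  rewrite -sum_tel2 // -big_split /= -big_split /=.
  apply: eq_big_nat => j /andP [j1 _]; rewrite keyT // -addn1 PoszD; ring.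
have dN : delta b N = 0 by apply: (delta_valid vN).
rewrite /ell (ellH_N Ps vs) (ellH_N Pb vN) (absb_N Ps vs) (absb_N Pb vN).
rewrite !big_nat_recl // hL hD hE dN dH1 -(hid c3 (b3 1%N)).
have -> : s 1%N = c by [].
have g1 : (g 1%N)%:Z = 3 by [].
rewrite /delta /= g1; split; ring.
Qed.


Lemma tau_valid N b : valid N.+1 b -> valid N (tau b).
Proof.
move=> v [|j] /= h; first by [].
by rewrite v // g_succ subKn // g_le.
Qed.

Lemma tau_inP b : inP b -> inP (tau b).
Proof.
move=> Pb; have [N [N1 v]] := exists_valid Pb.
split; first by case=> [|j] //=; rewrite leq_subr.
split; first by [].
by exists N; apply: tau_valid; apply: validW v.
Qed.

Lemma sigma_tau b : inP b -> sigma (b 1%N) (tau b) = b.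
Proof.
case=> b3 [b0 _]; apply: funext => -[|[|j]] //=.
by rewrite subKn.
Qed.

Lemma tau_sigma c b : inP b -> tau (sigma c b) = b.
Proof.
case=> b3 [b0 _]; apply: funext => -[|j] //=.
by rewrite subKn.
Qed.

Lemma base1 b : inP b -> valid 1 b -> ell b = 0 /\ absb b = 0.
Proof.
move=> Pb v; rewrite /ell (ellH_N Pb v) (absb_N Pb v) !big_geq // v //.
Qed.

Lemma dd_ge0 c c' : 0 <= dd c c'.
Proof. by []. Qed.

Lemma dd0 c c' : dd c c' = 0 -> c = c'.
Proof. by rewrite /dd => -[] h; lia. Qed.

Lemma inv_gen N : forall b, inP b -> valid N b ->
  [/\ 0 <= ell b, 0 <= absb b, (ell b = 0 -> forall k, b k = g k) &
      (forall k, absb b < k%:Z -> b k = g k)].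
Proof.
have base : forall b, inP b -> valid 1 b ->
  [/\ 0 <= ell b, 0 <= absb b, (ell b = 0 -> forall k, b k = g k) &
      (forall k, absb b < k%:Z -> b k = g k)].
  move=> b Pb v; have [-> ->] := base1 Pb v.
  have all : forall k, b k = g k by case=> [|k]; [case: Pb => _ [] | apply: v].
  by split.
elim: N => [|N IH] b Pb v; first by apply: base => //; apply: validW v.
case: N IH v => [|N] IH v; first by apply: base.
set b' := tau b.
have Pb' : inP b' by apply: tau_inP.
have vb' : valid N.+1 b' by apply: tau_valid.
have [l0 a0 lg ag] := IH b' Pb' vb'.
have b3 : forall k, (b k <= 3)%N by case: Pb.
have b0 : b 0%N = g 0%N by case: Pb => _ [].
have [el ab] := sigma_stats (b3 1%N) Pb'.
rewrite sigma_tau // in el ab.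
have d0 := dd_ge0 (b 1%N) (b' 1%N).
have hb : forall j, b' j.+1 = g j.+1 -> b j.+2 = g j.+2.
  move=> j h; have e : b' j.+1 = (3 - b j.+2)%N by [].
  by rewrite h in e; rewrite [g j.+2]g_succ e subKn.
split.
- by rewrite el; lia.
- by rewrite ab; lia.
- rewrite el => h.
  have l0' : ell b' = 0 by lia.
  have dz : dd (b 1%N) (b' 1%N) = 0 by lia.
  have bg := lg l0'.
  case=> [//|[|j]]; first by rewrite (dd0 dz) bg.
  by apply: hb; apply: bg.
- move=> k; rewrite ab => hk.
  have [l0'|lpos] : ell b' = 0 \/ 0 < ell b' by lia.
  + have bg := lg l0'.
    have vb1 : valid 1 b' by move=> i _; apply: bg.
    have [_ az] := base1 Pb' vb1.
    case: k hk => [//|[|j]] hk; last by apply: hb; apply: bg.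
    have dz : dd (b 1%N) (b' 1%N) = 0 by lia.
    by rewrite (dd0 dz) bg.
  + case: k hk => [//|[|j]] hk; first by lia.
    by apply: hb; apply: ag; lia.
Qed.

Lemma absb_tail b : inP b -> forall k, absb b < k%:Z -> b k = g k.
Proof. by move=> Pb; have [N [_ v]] := exists_valid Pb; case: (inv_gen Pb v). Qed.

Definition extf (N : nat) (f : {ffun 'I_N.+1 -> 'I_4}) (k : nat) : nat :=
  if (k < N.+1)%N then (if k is 0 then 0%N else nat_of_ord (f (inord k))) else g k.

Lemma finite_S m n : finite_set (Sset m n).
Proof.
set N := `|n|%N.
apply: (@sub_finite_set _ _ (extf (N:=N) @` [set: {ffun 'I_N.+1 -> 'I_4}])).
  move=> b [Pb [_ hn]].
  have b3 : forall k, (b k <= 3)%N by case: Pb.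
  have b0 : b 0%N = g 0%N by case: Pb => _ [].
  exists [ffun i : 'I_N.+1 => (inord (b i) : 'I_4)] => //.
  apply: funext => k; rewrite /extf.
  case: ifP => hk.
    case: k hk => [//|k] hk; rewrite ffunE /= inordK // inordK //.
    by rewrite ltnS.
  symmetry; apply: absb_tail => //; rewrite hn.
  by move: hk => /negbT; rewrite -leqNgt => hk; lia.
by apply: finite_image; apply: finite_finset.
Qed.

Section Epart.
Local Open Scope classical_set_scope.

Definition Sc (c : nat) (m n : int) : set (nat -> nat) :=
  [set b | inP b /\ b 1%N = c /\ ell b = m /\ absb b = n].
Definition Jc (c : nat) (m n : int) : int := (#|` fset_set (Sc c m n)|)%fset%:Z.

Lemma finite_Sc c m n : finite_set (Sc c m n).
Proof.
apply: (@sub_finite_set _ _ (Sset m n)); last exact: finite_S.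
by move=> b [Pb [_ [e a]]].
Qed.

Lemma cardU (T : choiceType) (A B : set T) : finite_set A -> finite_set B ->
  A `&` B = set0 ->
  #|` fset_set (A `|` B)|%fset = (#|` fset_set A|%fset + #|` fset_set B|%fset)%N.
Proof.
move=> fA fB AB; rewrite fset_setU // cardfsU -fset_setI // AB fset_set0 cardfs0.
by rewrite subn0.
Qed.

Lemma card_img (T U : choiceType) (f : T -> U) (A : set T) : finite_set A ->
  (forall x y, A x -> A y -> f x = f y -> x = y) ->
  #|` fset_set (f @` A)|%fset = #|` fset_set A|%fset.
Proof.
move=> fA inj; rewrite fset_set_image // card_in_imfset //.
move=> x y; rewrite !in_fset_set // => /set_mem hx /set_mem hy; exact: inj.
Qed.

Lemma Sc_disj c c' m n m' n' : c <> c' -> Sc c m n `&` Sc c' m' n' = set0.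
Proof.
move=> cc; apply/seteqP; split => b //=.
by move=> [[_ [e1 _]] [_ [e2 _]]]; apply: cc; rewrite -e1 -e2.
Qed.

Lemma I3 (T : Type) (A B C D : set T) : A `&` D = set0 -> B `&` D = set0 ->
  C `&` D = set0 -> (A `|` B `|` C) `&` D = set0.
Proof. by move=> h1 h2 h3; rewrite !setIUl h1 h2 h3 !setU0. Qed.
Lemma I2 (T : Type) (A B C : set T) : A `&` C = set0 -> B `&` C = set0 ->
  (A `|` B) `&` C = set0.
Proof. by move=> h1 h2; rewrite !setIUl h1 h2 !setU0. Qed.

Lemma card4 (F : nat -> set (nat -> nat)) :
  (forall c, finite_set (F c)) ->
  (forall c c', (c <= 3)%N -> (c' <= 3)%N -> c <> c' -> F c `&` F c' = set0) ->
  (#|` fset_set (F 0%N `|` F 1%N `|` F 2%N `|` F 3%N)|%fset)%:Z =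
  (#|` fset_set (F 0%N)|%fset)%:Z + (#|` fset_set (F 1%N)|%fset)%:Z +
  (#|` fset_set (F 2%N)|%fset)%:Z + (#|` fset_set (F 3%N)|%fset)%:Z.
Proof.
move=> fin dj.
have d c c' : (c <= 3)%N -> (c' <= 3)%N -> c != c' -> F c `&` F c' = set0.
  by move=> h1 h2 /eqP h3; apply: dj.
have f01 : finite_set (F 0%N `|` F 1%N) by rewrite finite_setU; split.
have f012 : finite_set (F 0%N `|` F 1%N `|` F 2%N) by rewrite finite_setU; split.
rewrite cardU //; last by apply: I3; apply: d.
rewrite cardU //; last by apply: I2; apply: d.
rewrite cardU //; last by apply: d.
Qed.

Lemma R1 m n : Jcoef m n = Jc 0 m n + Jc 1 m n + Jc 2 m n + Jc 3 m n.
Proof.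
rewrite /Jcoef /Jc.
have -> : Sset m n = Sc 0 m n `|` Sc 1 m n `|` Sc 2 m n `|` Sc 3 m n.
  apply/seteqP; split => b /=.
    move=> [Pb [e a]]; have h3 : (b 1%N <= 3)%N by case: Pb.
    have hS : forall c, b 1%N = c -> Sc c m n b by move=> c hc; split.
    move: h3; case E: (b 1%N) => [|[|[|[|k]]]] // _.
    + by left; left; left; apply: hS.
    + by left; left; right; apply: hS.
    + by left; right; apply: hS.
    + by right; apply: hS.
  by move=> [[[|]|]|] [Pb [_ [e a]]].
apply: (card4 (F := fun c => Sc c m n)) => //.
- move=> c; exact: finite_Sc.
- move=> c c' _ _ cc; exact: Sc_disj.
Qed.

Lemma R2 c m n : (c <= 3)%N ->
  Jc c m n = Jc 0 (m - dd c 0) (n - m) + Jc 1 (m - dd c 1) (n - m) +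
             Jc 2 (m - dd c 2) (n - m) + Jc 3 (m - dd c 3) (n - m).
Proof.
move=> c3; rewrite /Jc.
set F := fun c' => Sc c' (m - dd c c') (n - m).
have -> : Sc c m n = sigma c @` (F 0%N `|` F 1%N `|` F 2%N `|` F 3%N).
  apply/seteqP; split => b /=.
    move=> [Pb [b1 [e a]]].
    set b' := tau b.
    have Pb' : inP b' by apply: tau_inP.
    have [el ab] := sigma_stats c3 Pb'.
    have eb : sigma c b' = b by rewrite -b1 sigma_tau.
    rewrite eb in el ab.
    exists b'; last exact: eb.
    have hS : forall c', b' 1%N = c' -> F c' b'.
      move=> c' hc; rewrite /F /Sc /=; split => //; split => //.
      by rewrite -hc; split; [rewrite -e el | rewrite -a ab -e el]; ring.
    have h3 : (b' 1%N <= 3)%N by case: Pb'.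
    move: h3; case E: (b' 1%N) => [|[|[|[|k]]]] // _.
    + by left; left; left; apply: hS.
    + by left; left; right; apply: hS.
    + by left; right; apply: hS.
    + by right; apply: hS.
  move=> [b' hb' <-].
  have : exists c', F c' b' by case: hb' => [[[h|h]|h]|h]; eexists; exact: h.
  move=> [c' [Pb' [b1 [e a]]]].
  have [el ab] := sigma_stats c3 Pb'.
  split; first exact: sigma_inP.
  split; first by [].
  by rewrite el ab e a b1; split; ring.
rewrite card_img.
- apply: (card4 (F := F)).
  + move=> c'; exact: finite_Sc.
  + move=> c1 c2 _ _ cc; exact: Sc_disj.
- by rewrite !finite_setU; do !split; apply: finite_Sc.
- move=> x y hx hy exy.
  have Px : inP x by case: hx => [[[h|h]|h]|h]; case: h.
  have Py : inP y by case: hy => [[[h|h]|h]|h]; case: h.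
  by rewrite -(tau_sigma c Px) -(tau_sigma c Py) exy.
Qed.

End Epart.


Definition keyT := (nat * int * int)%type.
Definition entryT := (int * keyT)%type.

Definition GJ (m n : int) (k : keyT) : int := Jc k.1.1 (m - k.1.2) (n - 2 * m - k.2).
Definition evL (m n : int) (L : seq entryT) : int :=
  foldr (fun t acc => t.1 * GJ m n t.2 + acc) 0 L.

Lemma ev_cat m n L1 L2 : evL m n (L1 ++ L2) = evL m n L1 + evL m n L2.
Proof. by elim: L1 => [|t L IH] /=; [rewrite add0r | rewrite IH addrA]. Qed.

Definition scaleL (k : int) (L : seq entryT) : seq entryT := [seq (k * t.1, t.2) | t <- L].

Lemma ev_scale m n k L : evL m n (scaleL k L) = k * evL m n L.
Proof. by elim: L => [|t L IH] /=; [rewrite mulr0 | rewrite IH; ring]. Qed.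

Lemma ev_flat m n (T : Type) (p : seq T) (h : T -> int) (f : T -> seq entryT) :
  (forall t, h t = evL m n (f t)) ->
  \sum_(t <- p) h t = evL m n (flatten [seq f t | t <- p]).
Proof.
move=> hf; elim: p => [|t p IH]; first by rewrite big_nil.
by rewrite big_cons /= ev_cat IH hf.
Qed.

Definition colors := [:: 0%N; 1%N; 2%N; 3%N].

Lemma ev_colors m n (f : nat -> keyT) :
  evL m n [seq (1, f c) | c <- colors] =
  GJ m n (f 0%N) + GJ m n (f 1%N) + GJ m n (f 2%N) + GJ m n (f 3%N).
Proof. rewrite /evL /=; ring. Qed.

Definition seg1c (c : nat) (i j : int) : seq entryT :=
  [seq (1, (c', i + dd c c', j - i)) | c' <- colors].
Definition seg1 (i j : int) : seq entryT := flatten [seq seg1c c i j | c <- colors].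
Definition seg0c (c : nat) (i j : int) : seq entryT :=
  flatten [seq seg1c c' (i + dd c c') (j - i) | c' <- colors].
Definition seg0 (i j : int) : seq entryT := flatten [seq seg0c c i j | c <- colors].
Definition seg2 (i j : int) : seq entryT := [seq (1, (c, i, j)) | c <- colors].

Lemma E2 m n i j : Jcoef (m - i) (n - 2 * m - j) = evL m n (seg2 i j).
Proof. by rewrite R1 /seg2 ev_colors /GJ; cbn [fst snd]. Qed.

Lemma E1c m n c i j : (c <= 3)%N ->
  Jc c (m - i) (n - m - j) = evL m n (seg1c c i j).
Proof.
move=> c3; have a1 : forall d, m - i - d = m - (i + d) by move=> d; ring.
have a2 : n - m - j - (m - i) = n - 2 * m - (j - i) by ring.
by rewrite R2 // !a1 a2 /seg1c ev_colors /GJ; cbn [fst snd].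
Qed.

Lemma ev_flat4 m n (f : nat -> seq entryT) :
  evL m n (flatten [seq f c | c <- colors]) =
  evL m n (f 0%N) + evL m n (f 1%N) + evL m n (f 2%N) + evL m n (f 3%N).
Proof. rewrite /colors /= !ev_cat /=; ring. Qed.

Lemma E1 m n i j : Jcoef (m - i) (n - m - j) = evL m n (seg1 i j).
Proof. by rewrite R1 /seg1 ev_flat4 !E1c. Qed.

Lemma E0c m n c i j : (c <= 3)%N ->
  Jc c (m - i) (n - j) = evL m n (seg0c c i j).
Proof.
move=> c3; have a1 : forall d, m - i - d = m - (i + d) by move=> d; ring.
have a2 : n - j - (m - i) = n - m - (j - i) by ring.
by rewrite R2 // !a1 a2 /seg0c ev_flat4 !E1c.
Qed.

Lemma E0 m n i j : Jcoef (m - i) (n - j) = evL m n (seg0 i j).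
Proof. by rewrite R1 /seg0 ev_flat4 !E0c. Qed.

Lemma actE0 m n (p : lpoly) : act p (Jsub 0) m n =
  evL m n (flatten [seq scaleL t.1.1 (seg0 t.1.2 t.2) | t <- p]).
Proof.
apply: ev_flat => t; rewrite ev_scale -E0 /Jsub; congr (_ * Jcoef _ _); ring.
Qed.

Lemma actE1 m n (p : lpoly) : act p (Jsub 1) m n =
  evL m n (flatten [seq scaleL t.1.1 (seg1 t.1.2 (t.2 - t.1.2)) | t <- p]).
Proof.
apply: ev_flat => t; rewrite ev_scale -E1 /Jsub; congr (_ * Jcoef _ _); ring.
Qed.

Lemma actE2 m n (p : lpoly) : act p (Jsub 2) m n =
  evL m n (flatten [seq scaleL t.1.1 (seg2 t.1.2 (t.2 - 2 * t.1.2)) | t <- p]).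
Proof.
apply: ev_flat => t; rewrite ev_scale -E2 /Jsub; congr (_ * Jcoef _ _); ring.
Qed.

Fixpoint insL (t : entryT) (A : seq entryT) : seq entryT :=
  match A with
  | [::] => [:: t]
  | u :: A' => if u.2 == t.2 then (u.1 + t.1, u.2) :: A' else u :: insL t A'
  end.

Lemma ev_ins m n t A : evL m n (insL t A) = t.1 * GJ m n t.2 + evL m n A.
Proof.
elim: A => [|u A IH] /=; first by [].
case: eqP => [e|_] /=; first by rewrite e; ring.
rewrite IH; ring.
Qed.

Definition normL (L : seq entryT) : seq entryT := foldr insL [::] L.

Lemma ev_norm m n L : evL m n (normL L) = evL m n L.
Proof. by elim: L => [|t L IH] //=; rewrite ev_ins IH. Qed.

Lemma ev_zero m n A : all (fun t : entryT => t.1 == 0) A -> evL m n A = 0.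
Proof.
elim: A => [|t A IH] //= /andP [/eqP -> h]; rewrite IH // mul0r addr0 //.
Qed.

Definition X0 : seq entryT := flatten [seq scaleL t.1.1 (seg0 t.1.2 t.2) | t <- P_q].
Definition X1 : seq entryT :=
  flatten [seq scaleL t.1.1 (seg1 t.1.2 (t.2 - t.1.2)) | t <- lmul P_1xq P_2].
Definition X2 : seq entryT :=
  flatten [seq scaleL t.1.1 (seg2 t.1.2 (t.2 - 2 * t.1.2)) | t <- lmul P_1xq2 P_1mx2q2].

Lemma checkL : all (fun t : entryT => t.1 == 0) (normL (X0 ++ scaleL (-1) X1 ++ X2)).
Proof. by vm_compute. Qed.

Lemma identityJ m n :
  act P_q (Jsub 0) m n =
  act (lmul P_1xq P_2) (Jsub 1) m n - act (lmul P_1xq2 P_1mx2q2) (Jsub 2) m n.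
Proof.
rewrite actE0 actE1 actE2.
change (evL m n X0 = evL m n X1 - evL m n X2).
have := ev_zero m n checkL.
rewrite ev_norm (ev_cat m n X0) (ev_cat m n (scaleL (-1) X1) X2) (ev_scale m n (-1) X1).
move: (evL m n X0) (evL m n X1) (evL m n X2) => a b c h.
lia.
Qed.

Theorem mainTheorem4 :
  (forall m n : int, finite_set (Sset m n)) /\
  (forall m n : int,
     act P_q (Jsub 0) m n =
     act (lmul P_1xq P_2) (Jsub 1) m n - act (lmul P_1xq2 P_1mx2q2) (Jsub 2) m n).
Proof.
split; [exact: finite_S | exact: identityJ].
Qed.
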